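(* Let $R$ be a ring and $I$ an ideal of $R$ with $I\subseteq P(R)$. If $R/I$ is almost Armendariz, then $R$ is almost Armendariz.
   Context: All rings are associative with identity. For a ring $R$, $P(R)$ denotes the prime radical of $R$ (the intersection of all prime ideals of $R$, equivalently the set of strongly nilpotent elements of $R$). A ring $R$ is called almost Armendariz if whenever $f(x)=\sum_{i=0}^m a_ix^i$ and $g(x)=\sum_{j=0}^n b_jx^j\in R[x]$ satisfy $f(x)g(x)=0$, then $a_ib_j\in P(R)$ for all $0\le i\le m$, $0\le j\le n$. *)

(* Defs.v *)
From HB Require Import structures.
From mathcomp Require Import all_boot all_order all_algebra.
Set Implicit Arguments. Unset Strict Implicit. Unset Printing Implicit Defensive.
Import GRing.Theory.
Local Open Scope ring_scope.

Definition is_ideal (R : nzRingType) (I : R -> Prop) : Prop :=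
  [/\ I 0,
      (forall x y, I x -> I y -> I (x + y)),
      (forall x, I x -> I (- x)),
      (forall r x, I x -> I (r * x)) &
      (forall r x, I x -> I (x * r))].

Definition is_prime_ideal (R : nzRingType) (P : R -> Prop) : Prop :=
  [/\ is_ideal P, ~ P 1 &
      (forall a b, (forall r, P (a * r * b)) -> P a \/ P b)].

Definition prime_radical (R : nzRingType) (x : R) : Prop :=
  forall P : R -> Prop, is_prime_ideal P -> P x.

Definition almost_armendariz (R : nzRingType) : Prop :=
  forall f g : {poly R}, f * g = 0 ->
    forall i j : nat, prime_radical (f`_i * g`_j).

(* Main.v *)
Require Import Defs.
From HB Require Import structures.
From mathcomp Require Import all_boot all_order all_algebra.
Local Open Scope ring_scope.
Import GRing.Theory.

Theorem proposition2p4 (R : nzRingType) (I : R -> Prop)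
  (S : nzRingType) (pi : {rmorphism R -> S}) :
  is_ideal I ->
  (forall x, I x -> prime_radical x) ->
  (forall s : S, exists x : R, pi x = s) ->
  (forall x : R, pi x = 0 <-> I x) ->
  almost_armendariz S ->
  almost_armendariz R.
Proof.
move=> HI HIP Hsur Hker HS f g fg0 i j P [[P0 PD PN PL PR] P1 Pp].
have IP : forall x, I x -> P x.
  by move=> x /HIP; apply; split=> //; split.
pose Q := fun s : S => exists x, pi x = s /\ P x.
have L : forall x, Q (pi x) -> P x.
  move=> x [y [e Py]].
  have : I (x - y) by apply/Hker; rewrite rmorphB e subrr.
  move=> /IP H; have := PD _ _ H Py; by rewrite subrK.
have : prime_radical (pi (f`_i * g`_j)).
  rewrite rmorphM -!coef_map; apply: HS.
  by rewrite -rmorphM fg0 rmorph0.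
move=> /(_ Q) HQ; apply: (L); apply: HQ; split; [split|..].
- by exists 0; rewrite rmorph0.
- move=> _ _ [x [<- Px]] [y [<- Py]]; exists (x + y); split; [exact: rmorphD|exact: PD].
- move=> _ [x [<- Px]]; exists (- x); split; [exact: rmorphN|exact: PN].
- move=> r _ [x [<- Px]]; have [r' <-] := Hsur r.
  exists (r' * x); split; [exact: rmorphM|exact: PL].
- move=> r _ [x [<- Px]]; have [r' <-] := Hsur r.
  exists (x * r'); split; [exact: rmorphM|exact: PR].
- by move=> H; apply: P1; apply: (L); rewrite rmorph1.
- move=> a b H; have [a' ea] := Hsur a; have [b' eb] := Hsur b.
  have : P a' \/ P b'.
    apply: Pp => r; apply: (L); rewrite !rmorphM ea eb.
    by apply: H.
  by case=> [Pa|Pb]; [left; exists a'|right; exists b'].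
Qed.
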